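(* Let $n\in\mathbb{N}$, $K>0$, $\alpha,\beta,\kappa,a,c\in\mathbb{R}$, and let $H$ be a symmetric $n\times n$ real matrix with $-KI\preceq H\preceq KI$. Consider the symmetric $2n\times2n$ matrix $$A=\begin{pmatrix}\alpha I&\beta I+aH\\\beta I+aH&\kappa I+cH\end{pmatrix}.$$ If $-cK-\alpha-\kappa\le0$ in the case $c\le0$ (respectively $cK-\alpha-\kappa\le0$ in the case $c>0$), and $$a^2K^2-(c\alpha-2\beta a)K-\alpha\kappa+\beta^2\le0,\qquad a^2K^2+(c\alpha-2\beta a)K-\alpha\kappa+\beta^2\le0,$$ then $A$ is positive semidefinite.
   Context: $I$ denotes the $n\times n$ identity matrix and $\preceq$ the Loewner order on symmetric matrices. *)

(* Defs.v *)
From mathcomp Require Import all_boot all_order all_algebra.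
From mathcomp Require Import reals.
Set Implicit Arguments. Unset Strict Implicit. Unset Printing Implicit Defensive.
Import Order.TTheory GRing.Theory Num.Theory.
Local Open Scope ring_scope.

Definition is_symmetric_mx (R : pzRingType) (n : nat) (A : 'M[R]_n) : Prop := A^T = A.

Definition psdmx (R : numDomainType) (n : nat) (A : 'M[R]_n) : Prop :=
  forall x : 'cV[R]_n, 0 <= (x^T *m A *m x) 0 0.

Definition loewner_le (R : numDomainType) (n : nat) (A B : 'M[R]_n) : Prop :=
  psdmx (B - A).

(* Main.v *)
Require Import Defs.
From mathcomp Require Import all_boot all_order all_algebra.
From mathcomp Require Import reals ring lra.
Import Order.TTheory GRing.Theory Num.Theory.
Set Implicit Arguments. Unset Strict Implicit.
Local Open Scope ring_scope.
Section S.
Variables (R : realType) (n : nat).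
Definition dot (p q : 'cV[R]_n) := (p^T *m q) 0 0.
Lemma dotC p q : dot p q = dot q p.
Proof. by rewrite /dot -{1}(trmxK q) -trmx_mul mxE. Qed.
Lemma dotDr p q r : dot p (q + r) = dot p q + dot p r.
Proof. by rewrite /dot mulmxDr !mxE. Qed.
Lemma dotZr p q k : dot p (k *: q) = k * dot p q.
Proof. by rewrite /dot -scalemxAr mxE. Qed.
Lemma dotDl p q r : dot (q + r) p = dot q p + dot r p.
Proof. by rewrite dotC dotDr !(dotC p). Qed.
Lemma dotZl p q k : dot (k *: q) p = k * dot q p.
Proof. by rewrite dotC dotZr dotC. Qed.
Lemma dotNl p q : dot (- q) p = - dot q p.
Proof. by rewrite -scaleN1r dotZl mulN1r. Qed.
Lemma dotNr p q : dot p (- q) = - dot p q.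
Proof. by rewrite -scaleN1r dotZr mulN1r. Qed.
Lemma dot_ge0 p : 0 <= dot p p.
Proof. rewrite /dot mxE; apply: sumr_ge0 => i _; rewrite mxE -expr2; exact: sqr_ge0. Qed.
Lemma dot_sym (H : 'M[R]_n) p q : H^T = H -> dot p (H *m q) = dot (H *m p) q.
Proof. by move=> sH; rewrite /dot trmx_mul sH mulmxA. Qed.
Lemma quad (H : 'M[R]_n) p q k l :
  (p^T *m (k%:M + l *: H) *m q) 0 0 = k * dot p q + l * dot p (H *m q).
Proof.
by rewrite mulmxDr mulmxDl mul_mx_scalar -scalemxAl -scalemxAr -scalemxAl /dot mulmxA !mxE.
Qed.
Lemma quad1 p q k : (p^T *m k%:M *m q) 0 0 = k * dot p q.
Proof. by rewrite mul_mx_scalar -scalemxAl /dot !mxE. Qed.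
End S.
Lemma arith (R : realType) (K alpha beta kappa a c uu uv uy s0 s1 s2 : R) :
  0 < K ->
  (c <= 0 -> - c * K - alpha - kappa <= 0) ->
  (0 < c -> c * K - alpha - kappa <= 0) ->
  a ^+ 2 * K ^+ 2 - (c * alpha - 2 * beta * a) * K - alpha * kappa + beta ^+ 2 <= 0 ->
  a ^+ 2 * K ^+ 2 + (c * alpha - 2 * beta * a) * K - alpha * kappa + beta ^+ 2 <= 0 ->
  0 <= alpha^+2 * uu + beta^+2 * s0 + a^+2 * s2 + 2*alpha*beta*uv + 2*alpha*a*uy + 2*beta*a*s1 ->
  0 <= s0 -> 0 <= K * s0 + s1 -> 0 <= K * s0 - s1 -> 0 <= K^+2 * s0 - s2 ->
  0 <= alpha * uu + 2*beta*uv + 2*a*uy + kappa * s0 + c * s1.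
Proof.
move=> K0 hc1 hc2 f1 f2 N s00 p1 p2 p3.
set gp := - (a ^+ 2 * K ^+ 2 + (c * alpha - 2 * beta * a) * K - alpha * kappa + beta ^+ 2).
set gm := - (a ^+ 2 * K ^+ 2 - (c * alpha - 2 * beta * a) * K - alpha * kappa + beta ^+ 2).
have gp0 : 0 <= gp by rewrite /gp oppr_ge0.
have gm0 : 0 <= gm by rewrite /gm oppr_ge0.
set T := (alpha*kappa - beta^+2) * s0 + (c*alpha - 2*beta*a) * s1 - a^+2 * s2.
have T0 : 0 <= T.
  have e : 2 * K * T = 2 * K * a^+2 * (K^+2 * s0 - s2) + (K*s0+s1)*gm + (K*s0-s1)*gp.
    by rewrite /T /gp /gm; ring.
  have : 0 <= 2 * K * T.
    rewrite e; apply: addr_ge0; first apply: addr_ge0.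
    - by apply: mulr_ge0 => //; apply: mulr_ge0; [apply: mulr_ge0; lra| exact: sqr_ge0].
    - exact: mulr_ge0.
    - exact: mulr_ge0.
  by rewrite pmulr_rge0 //; lra.
set Q := alpha * uu + 2*beta*uv + 2*a*uy + kappa * s0 + c * s1.
have eQ : alpha * Q = (alpha^+2 * uu + beta^+2 * s0 + a^+2 * s2 + 2*alpha*beta*uv + 2*alpha*a*uy + 2*beta*a*s1) + T.
  by rewrite /Q /T; ring.
have aQ : 0 <= alpha * Q by rewrite eQ; apply: addr_ge0.
have sum : a^+2 * K^+2 + beta^+2 <= alpha * kappa by lra.
have hk : 0 <= alpha + kappa.
  case: (lerP c 0) => hc; [have := hc1 hc | have := hc2 hc]; nra.
case: (ltrgtP alpha 0) => ha.
- exfalso; nra.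
- by move: aQ; rewrite pmulr_rge0.
- subst alpha.
  have hb : beta = 0.
    have : beta ^+ 2 <= 0 by have := sqr_ge0 (a * K); rewrite exprMn; lra.
    by rewrite le_eqVlt ltNge sqr_ge0 orbF sqrf_eq0 => /eqP.
  have ha : a = 0.
    have : (a * K) ^+ 2 <= 0 by rewrite exprMn; have := sqr_ge0 beta; lra.
    rewrite le_eqVlt ltNge sqr_ge0 orbF sqrf_eq0 mulf_eq0 => /orP [/eqP //|/eqP]; lra.
  rewrite /Q hb ha.
  case: (lerP c 0) => hc; [have := hc1 hc | have := hc2 hc]; nra.
Qed.
Lemma addE (R : realType) (A B : 'M[R]_1) : (A + B) 0 0 = A 0 0 + B 0 0.
Proof. by rewrite mxE. Qed.

Theorem propositionF18 (R : realType) (n : nat) (K alpha beta kappa a c : R)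
    (H : 'M[R]_n) :
  0 < K ->
  is_symmetric_mx H ->
  loewner_le (- (K%:M)) H -> loewner_le H (K%:M) ->
  (c <= 0 -> - c * K - alpha - kappa <= 0) ->
  (0 < c -> c * K - alpha - kappa <= 0) ->
  a ^+ 2 * K ^+ 2 - (c * alpha - 2 * beta * a) * K - alpha * kappa + beta ^+ 2 <= 0 ->
  a ^+ 2 * K ^+ 2 + (c * alpha - 2 * beta * a) * K - alpha * kappa + beta ^+ 2 <= 0 ->
  psdmx (block_mx (alpha%:M) (beta%:M + a *: H)
                  (beta%:M + a *: H) (kappa%:M + c *: H) : 'M[R]_(n + n)).
Proof.
move=> K0 sH hl hu hc1 hc2 f1 f2 x.
have hlo (v : 'cV[R]_n) : 0 <= K * dot v v + dot v (H *m v).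
  by have := hl v; rewrite opprK addrC -{1}[H]scale1r quad mul1r.
have hup (v : 'cV[R]_n) : 0 <= K * dot v v - dot v (H *m v).
  by have := hu v; rewrite -scaleN1r quad mulN1r.
rewrite -(vsubmxK x) tr_col_mx mul_row_block mul_row_col !mulmxDl !addE !quad !quad1.
set u := usubmx x; set v := dsubmx x; set y := H *m v.
rewrite [dot v u]dotC (dot_sym _ _ sH) -/y [dot y u]dotC.
have N := dot_ge0 (alpha *: u + beta *: v + a *: y).
rewrite !(dotDl, dotDr, dotZl, dotZr) [dot v u]dotC [dot y u]dotC [dot y v]dotC in N.
set z := H *m y.
have Hw1 : H *m (K *: v + y) = K *: y + z by rewrite mulmxDr -scalemxAr.
have Hw2 : H *m (K *: v - y) = K *: y - z by rewrite mulmxDr mulmxN -scalemxAr.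
have e1 : dot v z = dot y y by rewrite /z (dot_sym _ _ sH).
have e2 : dot z v = dot y y by rewrite dotC e1.
have c1 := hup (K *: v + y).
have c2 := hlo (K *: v - y).
rewrite Hw1 in c1; rewrite Hw2 in c2.
rewrite !(dotDl, dotDr, dotZl, dotZr, dotNl, dotNr) [dot y v]dotC ?e1 ?e2 in c1 c2.
have p3 : 0 <= K^+2 * dot v v - dot y y.
  have : 0 <= 2 * K * (K^+2 * dot v v - dot y y) by lra.
  by rewrite pmulr_rge0 //; lra.
have := arith K0 hc1 hc2 f1 f2 _ (dot_ge0 v) (hlo v) (hup v) p3.
move=> /(_ (dot u u) (dot u v) (dot u y)) h.
have : 0 <= alpha * dot u u + 2 * beta * dot u v + 2 * a * dot u y + kappa * dot v v + c * dot v y.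
  by apply: h; lra.
lra.
Qed.
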